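(* Let $E_1,\dots,E_m$ be events on a probability space, let $1\le k\le m$, and fix real numbers $0<a<b$. Define $X_i=b$ on $E_i$ and $X_i=a$ on $E_i^c$, and for $\mathcal S\subseteq[m]$ with $|\mathcal S|=k$ define $$U(\mathcal S)=\mathbf P\Big(\bigcup_{i\in\mathcal S}E_i\Big),\qquad V(\mathcal S)=\mathbf E\Big[\ln\Big(\frac1k\sum_{i\in\mathcal S}X_i\Big)\Big].$$ Let $\mathcal S_L$ maximize $V$ and $\mathcal S_W$ maximize $U$ over all $k$-element subsets of $[m]$. Suppose there exist $\lambda\in[0,1]$ and $p\in(0,1/k]$ such that for every $k$-element $\mathcal S\subseteq[m]$, every $l\in[k]$, and every $T\subseteq\mathcal S$ with $|T|=l$, $$(1-\lambda)p^l(1-p)^{k-l}\le \mathbf P\Big(\Big(\bigcap_{i\in T}E_i\Big)\cap\Big(\bigcap_{j\in\mathcal S\setminus T}E_j^c\Big)\Big)\le(1+\lambda)p^l(1-p)^{k-l}.$$ Then $$\frac{U(\mathcal S_W)-U(\mathcal S_L)}{U(\mathcal S_W)}\le\frac{2\zeta(3)\lambda kp(1-p)}{\ln\!\big(1+\frac{b-a}{ka}\big)(1-\lambda)\big(1-(1-p)^k\big)},$$ where $\zeta(3)=\sum_{n=1}^\infty n^{-3}$.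
   Context: $[m]=\{1,\dots,m\}$. $\mathcal S_W$ is an optimal ''picking winners'' portfolio and $\mathcal S_L$ a log-optimal portfolio. *)

(* Defs.v *)
From HB Require Import structures.
From mathcomp Require Import all_boot all_order all_algebra.
From mathcomp Require Import all_classical all_reals all_analysis.
Set Implicit Arguments. Unset Strict Implicit. Unset Printing Implicit Defensive.
Import Order.TTheory GRing.Theory Num.Theory.
Local Open Scope classical_set_scope.
Local Open Scope ring_scope.

Definition Xv {T : Type} {R : realType} {m : nat} (E : 'I_m -> set T) (a b : R)
  (i : 'I_m) : T -> R := fun x => if `[< E i x >] then b else a.

Definition Ufun d (T : measurableType d) (R : realType) (P : probability T R)
  (m : nat) (E : 'I_m -> set T) (S : {set 'I_m}) : \bar R :=
  P (\big[setU/set0]_(i in S) E i).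

Definition Vfun d (T : measurableType d) (R : realType) (P : probability T R)
  (m k : nat) (E : 'I_m -> set T) (a b : R) (S : {set 'I_m}) : \bar R :=
  ('E_P[fun x => ln ((k%:R)^-1 * \sum_(i in S) Xv E a b i x)])%E.

Definition atom (T : Type) (m : nat) (E : 'I_m -> set T) (S A : {set 'I_m}) : set T :=
  (\big[setI/setT]_(i in A) E i) `&` (\big[setI/setT]_(j in S :\: A) ~` E j).

Definition zeta3 (R : realType) : R :=
  limn (fun N => \sum_(1 <= n < N) ((n%:R : R) ^+ 3)^-1).

(* Main.v *)
Require Import Defs.
From HB Require Import structures.
From mathcomp Require Import all_boot all_order all_algebra.
From mathcomp Require Import all_classical all_reals all_analysis.
From mathcomp Require Import ring lra zify.
Import Order.TTheory GRing.Theory Num.Theory.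
Local Open Scope classical_set_scope.
Local Open Scope ring_scope.

Module Helpers.
Set Implicit Arguments. Unset Strict Implicit.
Lemma inv_tel (R : realType) (x : R) : 0 < x -> x^-1 - (x+1)^-1 = (x*(x+1))^-1.
Proof.
move=> x0; have x1 : x + 1 != 0 by apply: lt0r_neq0; lra.
by field; rewrite x1 (lt0r_neq0 x0).
Qed.

Lemma zeta3_ge1 (R : realType) : 1 <= zeta3 R.
Proof.
set u := (fun N => \sum_(1 <= n < N) ((n%:R : R) ^+ 3)^-1).
have nd : nondecreasing_seq u.
  apply/nondecreasing_seqP => n; rewrite /u.
  case: n => [|n]; first by rewrite big_geq // big_geq.
  rewrite [leRHS]big_nat_recr //=; apply: ler_wpDr => //.
have ub : forall N, u N.+2 <= 2 - (N.+2%:R)^-1.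
  elim => [|N IH].
    rewrite /u big_nat1 expr1n invr1; lra.
  rewrite /u big_nat_recr //= -/(u N.+2).
  have h : ((N.+2%:R : R) ^+ 3)^-1 <= (N.+2%:R)^-1 - (N.+3%:R)^-1.
    have p2 : (0:R) < N.+2%:R by rewrite ltr0n.
    have p3 : (0:R) < N.+3%:R by rewrite ltr0n.
    have -> : (N.+2%:R : R)^-1 - (N.+3%:R)^-1 = (N.+2%:R * N.+3%:R)^-1.
      have -> : (N.+3%:R : R) = N.+2%:R + 1 by rewrite -natr1.
      exact: inv_tel.
    rewrite lef_pV2 ?posrE ?exprn_gt0 ?mulr_gt0 //.
    rewrite !exprS expr0 mulr1 ler_pM2l //.
    by rewrite -natrM ler_nat; nia.
  by apply: le_trans (lerD IH h) _; rewrite addrA subrK.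
have cv : cvgn u.
  apply: nondecreasing_is_cvgn => //; exists 2 => _ [n _ <-].
  case: n => [|[|n]]; first by rewrite /u big_geq.
    by rewrite /u big_geq.
  have := ub n; have : (0:R) <= (n.+2%:R)^-1 by rewrite invr_ge0 ler0n.
  by move=> h0 /le_trans; apply; rewrite gerBl.
have := nondecreasing_cvgn_le nd cv 2.
by rewrite /u big_nat1 expr1n invr1.
Qed.

Section Num.
Variable R : realFieldType.

Lemma sum_subsets_card m (S : {set 'I_m}) (h : nat -> R) :
  \sum_(A : {set 'I_m} | A \subset S) h #|A| =
  \sum_(l < #|S|.+1) 'C(#|S|, l)%:R * h l.
Proof.
rewrite (partition_big (fun A : {set 'I_m} => (inord #|A| : 'I_#|S|.+1)) xpredT) //=.
apply: eq_bigr => l _.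
transitivity (\sum_(A in [set A : {set 'I_m} | A \subset S & #|A| == l]) h l).
  apply: eq_big => A.
    rewrite !inE; case AS: (A \subset S) => //=.
    have hA : (#|A| < #|S|.+1)%N by rewrite ltnS subset_leq_card.
    apply/eqP/eqP => [<-|->]; first by rewrite inordK.
    by apply: val_inj; rewrite /= inordK.
  move=> /andP[AS /eqP <-]; rewrite inordK // ltnS subset_leq_card //.
by rewrite sumr_const cards_draws mulr_natl.
Qed.

Lemma binom1 k (p : R) :
  \sum_(l < k.+1) 'C(k, l)%:R * (p ^+ l * (1 - p) ^+ (k - l)) = 1.
Proof.
have e := exprDn (1 - p) p k; rewrite subrK expr1n in e; rewrite [RHS]e.
by apply: eq_bigr => l _; rewrite mulr_natl mulrC.
Qed.

Lemma binom_mean k (p : R) :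
  \sum_(l < k.+1) 'C(k, l)%:R * (p ^+ l * (1 - p) ^+ (k - l)) * l%:R = k%:R * p.
Proof.
case: k => [|K]; first by rewrite big_ord1 mulr0 mul0r.
rewrite big_ord_recl /= mulr0 add0r.
transitivity (\sum_(j < K.+1) (K.+1%:R * p) * ('C(K, j)%:R * (p ^+ j * (1 - p) ^+ (K - j)))).
  apply: eq_bigr => j _; rewrite /bump /= add1n.
  have e : (K.+1 * 'C(K, j) = j.+1 * 'C(K.+1, j.+1))%N by rewrite -mul_bin_diag.
  rewrite subSS exprS.
  have -> : ('C(K.+1, j.+1)%:R : R) * (p * p ^+ j * (1 - p) ^+ (K - j)) * j.+1%:R
          = (j.+1 * 'C(K.+1, j.+1))%N%:R * p * (p ^+ j * (1 - p) ^+ (K - j)).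
    by rewrite natrM; ring.
  by rewrite -e natrM; ring.
by rewrite -mulr_sumr binom1 mulr1.
Qed.

Lemma bonf k (p : R) : 0 <= p <= 1 ->
  (1 - p) ^+ k <= 1 - k%:R * p + k%:R * (k%:R - 1) / 2 * p ^+ 2.
Proof.
move=> /andP[p0 p1]; elim: k => [|k IH]; first by rewrite expr0 !mul0r subr0 addr0.
rewrite exprS.
have h1 : (1 - p) * (1 - p) ^+ k <= (1 - p) * (1 - k%:R * p + k%:R * (k%:R - 1) / 2 * p ^+ 2).
  by apply: ler_wpM2l => //; lra.
apply: le_trans h1 _; have -> : (k.+1%:R : R) = k%:R + 1 by rewrite -natr1.
have hk2 : 0 <= (k%:R : R) * (k%:R - 1).
  case: k {IH} => [|k]; first by rewrite mul0r.
  by rewrite -natr1 addrK mulr_ge0 ?ler0n // addr_ge0.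
have hk : 0 <= (k%:R : R) * (k%:R - 1) / 2 * p ^+ 3.
  by apply: mulr_ge0; [apply: mulr_ge0; lra | apply: exprn_ge0].
have e : (1 - p) * (1 - k%:R * p + k%:R * (k%:R - 1) / 2 * p ^+ 2) =
  1 - (k%:R + 1) * p + (k%:R + 1) * (k%:R + 1 - 1) / 2 * p ^+ 2
  - (k%:R * (k%:R - 1) / 2 * p ^+ 3).
  by field.
rewrite e; lra.
Qed.

Lemma Qbound k (p : R) (g : nat -> R) : 0 <= p -> k%:R * p <= 1 -> p <= 1 ->
  (forall l, g l <= l%:R - 1 + (l == 0)%:R) ->
  \sum_(l < k.+1) 'C(k, l)%:R * (p ^+ l * (1 - p) ^+ (k - l)) * g l <= k%:R * p * (1 - p) / 2.
Proof.
move=> p0 kp1 p1 hg.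
have pi0 : forall l : 'I_k.+1, 0 <= 'C(k, l)%:R * (p ^+ l * (1 - p) ^+ (k - l)).
  by move=> l; apply: mulr_ge0; rewrite ?ler0n // mulr_ge0 // exprn_ge0 // subr_ge0.
have H1 : \sum_(l < k.+1) 'C(k, l)%:R * (p ^+ l * (1 - p) ^+ (k - l)) * g l <=
  \sum_(l < k.+1) 'C(k, l)%:R * (p ^+ l * (1 - p) ^+ (k - l)) * (l%:R - 1 + (nat_of_ord l == 0%N)%:R).
  by apply: ler_sum => l _; apply: ler_wpM2l.
apply: le_trans H1 _.
under eq_bigr => l _ do rewrite !mulrDr mulrN1.
rewrite !big_split /= binom_mean sumrN binom1.
rewrite big_ord_recl /= big1 ?addr0; last first.
  by move=> l _; rewrite mulr0.
rewrite mulr1 subn0 expr0 mul1r bin0 mul1r.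
have := bonf k (p:=p); rewrite p0 p1 => /(_ isT) hb.
have hk : 0 <= (k%:R : R) * p by apply: mulr_ge0; rewrite ?ler0n.
have e : (k%:R : R) * (k%:R - 1) / 2 * p ^+ 2 = (k%:R * p) * (k%:R * p - p) / 2.
  by rewrite expr2; field.
rewrite e in hb; nra.
Qed.

End Num.

Lemma bigI_in (U : Type) (I : finType) (A : {set I}) (F : I -> set U) x :
  (\big[setI/setT]_(i in A) F i) x <-> (forall i, i \in A -> F i x).
Proof.
have H : forall r, (\big[setI/setT]_(i <- r | i \in A) F i) x <->
    (forall i, i \in r -> i \in A -> F i x).
  elim => [|j r IH]; first by rewrite big_nil; split.
  rewrite big_cons; case: ifPn => jA.
    split.
      move=> [Fj /IH H] i; rewrite inE => /orP[/eqP -> //|]; exact: H.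
    move=> H; split; first by apply: H; rewrite ?mem_head.
    by apply/IH => i ir; apply: H; rewrite inE ir orbT.
  rewrite IH; split => H i.
    rewrite inE => /orP[/eqP -> jA'|]; last exact: H.
    by rewrite jA' in jA.
  by move=> ir; apply: H; rewrite inE ir orbT.
rewrite H; split => H' i; last by move=> _; exact: H'.
by move=> iA; apply: H' => //; rewrite mem_index_enum.
Qed.

Section Prob.
Variables (d : measure_display) (T : measurableType d) (R : realType).
Variables (P : probability T R) (m : nat) (E : 'I_m -> set T).
Hypothesis mE : forall i, measurable (E i).

Definition A0 (S : {set 'I_m}) (x : T) : {set 'I_m} := [set i in S | `[< E i x >]].

Lemma atomP (S A : {set 'I_m}) x : A \subset S -> atom E S A x <-> A = A0 S x.
Proof.
move=> AS; rewrite /atom; split.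
  move=> [/bigI_in H1 /bigI_in H2]; apply/setP => i; rewrite !inE.
  case: (boolP (i \in A)) => iA.
    by rewrite (fintype.subsetP AS _ iA) /=; apply/esym/asboolP; exact: H1.
  case: (boolP (i \in S)) => iS //=; apply/esym/asboolP; apply: H2.
  by rewrite !inE iA iS.
move=> ->; split; apply/bigI_in => i; rewrite !inE.
  by move=> /andP[_ /asboolP].
by move=> /andP[+ iS] Ei => /negP; apply; rewrite iS /=; apply/asboolP.
Qed.

Lemma matom S A : measurable (atom E S A).
Proof.
apply: measurableI; apply: bigsetI_measurable => i _ //.
exact: measurableC.
Qed.

Lemma expect_formula (S : {set 'I_m}) (h : nat -> R) (f : T -> R) :
  (forall x, f x = h #|A0 S x|) ->
  ('E_P[f] = (\sum_(A : {set 'I_m} | A \subset S) h #|A| * fine (P (atom E S A)))%:E)%E.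
Proof.
move=> hf; rewrite unlock.
transitivity (\int[P]_x (\sum_(A : {set 'I_m} | A \subset S)
                 ((h #|A|)%:E * (\1_(atom E S A) x)%:E)))%E.
  apply: eq_integral => x _; rewrite hf sumEFin; congr (_%:E).
  rewrite (bigD1 (A0 S x)) /=; last by apply/fintype.subsetP => i; rewrite inE => /andP[].
  rewrite big1 ?addr0.
    rewrite indicE; have -> : x \in atom E S (A0 S x).
      by apply/mem_set/atomP => //; apply/fintype.subsetP => i; rewrite inE => /andP[].
    by rewrite mulr1.
  move=> A /andP[AS AA0]; rewrite indicE memNset ?mulr0 //.
  by move/(atomP _ AS) => AE; rewrite AE eqxx in AA0.
rewrite integral_sum //; last first.
  by move=> A; apply: integrableZl => //; apply: (integrable_indic P); exact: matom.
rewrite -sumEFin; apply: eq_bigr => A _.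
rewrite integralZl //; last by apply: (integrable_indic P); exact: matom.
rewrite integral_indic ?setIT; last exact: matom.
rewrite EFinM fineK //.
apply: fin_num_measure.
exact: matom.
exact: measurableT.
Qed.

Lemma sum_atoms (S : {set 'I_m}) : \sum_(A : {set 'I_m} | A \subset S) fine (P (atom E S A)) = 1.
Proof.
have := @expect_formula S (fun _ => 1) (cst 1) (fun _ => erefl).
rewrite expectation_cst => /esym/eqP; rewrite eqe => /eqP <-.
by apply: eq_bigr => A _; rewrite mul1r.
Qed.

Lemma U_formula (S : {set 'I_m}) : fine (Ufun P E S) =
  \sum_(A : {set 'I_m} | A \subset S) fine (P (atom E S A)) * (#|A| != 0%N)%:R.
Proof.
have mU : measurable (\big[setU/set0]_(i in S) E i).
  by apply: bigsetU_measurable => i _.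
have hC : atom E S finset.set0 = ~` (\big[setU/set0]_(i in S) E i).
  rewrite /atom big_pred0; last by move=> i; rewrite inE.
  rewrite setTI setC_bigsetU; apply: eq_bigl => i; by rewrite !inE.
have h1 : fine (P (atom E S finset.set0)) = 1 - fine (Ufun P E S).
  rewrite hC probability_setC // /Ufun -[X in (1 - X)%E]fineK //.
  exact: fin_num_measure.
have := sum_atoms S; rewrite (bigD1 finset.set0); last exact: finset.sub0set.
move=> /= H.
have -> : \sum_(A : {set 'I_m} | A \subset S) fine (P (atom E S A)) * (#|A| != 0%N)%:R =
   \sum_(A : {set 'I_m} | (A \subset S) && (A != finset.set0)) fine (P (atom E S A)).
  rewrite [LHS](bigD1 finset.set0); last exact: finset.sub0set.
  rewrite /= cards0 eqxx mulr0 add0r.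
  by apply: eq_bigr => A /andP[_ A0]; rewrite cards_eq0 A0 mulr1.
lra.
Qed.

Lemma V_formula (S : {set 'I_m}) (k : nat) (a b : R) : #|S| = k ->
  Vfun P k E a b S = (\sum_(A : {set 'I_m} | A \subset S)
     ln (k%:R^-1 * (k%:R * a + #|A|%:R * (b - a))) * fine (P (atom E S A)))%:E.
Proof.
move=> Sk; rewrite /Vfun.
apply: (@expect_formula S (fun l => ln (k%:R^-1 * (k%:R * a + l%:R * (b - a))))) => x.
congr (ln (_ * _)).
rewrite /Xv.
transitivity (\sum_(i in S) (a + (`[< E i x >])%:R * (b - a))).
  by apply: eq_bigr => i _; case: `[< E i x >]; rewrite /= ?mul1r ?mul0r ?addr0 // addrC subrK.
rewrite big_split /= sumr_const Sk; congr (_ + _); first by rewrite mulr_natl.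
have -> : (#|A0 S x|%:R : R) = \sum_(i in S) (`[< E i x >])%:R.
  rewrite -sum1_card natr_sum big_mkcond [RHS]big_mkcond /=.
  apply: eq_bigr => i _; rewrite inE.
  by case: (i \in S); case: `[< E i x >].
by rewrite big_distrl.
Qed.

End Prob.

End Helpers.
Import Helpers.

Theorem theorem5 (d : measure_display) (T : measurableType d) (R : realType)
  (P : probability T R) (m k : nat) (E : 'I_m -> set T) (a b lambda p : R)
  (SW SL : {set 'I_m}) :
  (forall i, measurable (E i)) ->
  (1 <= k <= m)%N ->
  0 < a -> a < b ->
  0 <= lambda -> lambda < 1 ->
  0 < p -> p <= (k%:R)^-1 ->
  (forall S A : {set 'I_m}, #|S| = k -> A \subset S -> (1 <= #|A| <= k)%N ->
     ((1 - lambda) * p ^+ #|A| * (1 - p) ^+ (k - #|A|))%:E <= P (atom E S A) /\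
     P (atom E S A) <= ((1 + lambda) * p ^+ #|A| * (1 - p) ^+ (k - #|A|))%:E)%E ->
  #|SW| = k -> (forall S : {set 'I_m}, #|S| = k -> (Ufun P E S <= Ufun P E SW)%E) ->
  #|SL| = k -> (forall S : {set 'I_m}, #|S| = k -> (Vfun P k E a b S <= Vfun P k E a b SL)%E) ->
  (fine (Ufun P E SW) - fine (Ufun P E SL)) / fine (Ufun P E SW) <=
  (2 * zeta3 R * lambda * k%:R * p * (1 - p)) /
  (ln (1 + (b - a) / (k%:R * a)) * (1 - lambda) * (1 - (1 - p) ^+ k)).
Proof.
move=> mE /andP[k1 km] a0 ab l0 l1 p0 pk hyp SWk _ SLk SLopt.
have kpos : (0 : R) < k%:R by rewrite ltr0n.
have kp1 : k%:R * p <= 1 by rewrite -(ler_pdivlMl _ _ kpos) mulr1.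
have k1R : (1 : R) <= k%:R by rewrite ler1n.
have p1 : p <= 1 by apply: le_trans pk _; rewrite invf_le1.
set c := (b - a) / (k%:R * a).
have c0 : 0 < c by apply: divr_gt0; [rewrite subr_gt0 | apply: mulr_gt0].
set L := ln (1 + c).
have L0 : 0 < L by apply: ln_gt0; lra.
pose g (l : nat) : R := if l == 0%N then 0 else ln (1 + l%:R * c) - L.
pose pi (l : nat) : R := p ^+ l * (1 - p) ^+ (k - l).
have Fform : forall l : nat, ln (k%:R^-1 * (k%:R * a + l%:R * (b - a))) =
    ln a + L * (l != 0%N)%:R + g l.
  move=> l.
  have e : k%:R^-1 * (k%:R * a + l%:R * (b - a)) = a * (1 + l%:R * c).
    rewrite /c; field; apply/andP; split; apply: lt0r_neq0 => //.
  have lc0 : 0 <= l%:R * c by apply: mulr_ge0; rewrite ?ler0n ?ltW.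
  rewrite e lnM ?posrE //; last lra.
  rewrite /g; case: eqP => [->|_] /=.
    by rewrite mul0r addr0 ln1 mulr0 !addr0.
  by rewrite mulr1; ring.
have g0 : forall l, 0 <= g l.
  move=> l; rewrite /g; case: eqP => // /eqP ln0.
  rewrite subr_ge0 /L ler_ln ?posrE; last 2 first.
  - lra.
  - have : 0 <= l%:R * c by apply: mulr_ge0; rewrite ?ler0n ?ltW.
    lra.
  rewrite lerD2l -[X in X <= _]mul1r; apply: ler_wpM2r; first exact: ltW.
  by move: (ler1n R l); rewrite lt0n ln0.
have gb : forall l, g l <= l%:R - 1 + (l == 0%N)%:R.
  move=> l; rewrite /g; case: eqP => [->|/eqP ln0] /=.
    by rewrite (_ : (0%:R : R) = 0) // (_ : (true%:R : R) = 1) //; lra.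
  rewrite addr0 /L -ln_div ?posrE; last 2 first.
  - have : 0 <= l%:R * c by apply: mulr_ge0; rewrite ?ler0n ?ltW.
    lra.
  - lra.
  have l1' : (1 : R) <= l%:R by rewrite ler1n lt0n.
  apply: le_trans (_ : ln (1 + ((1 + l%:R * c) / (1 + c) - 1)) <= _).
    by rewrite [1 + (_ - 1)]addrC subrK.
  apply: le_trans (le_ln1Dx _) _.
    have : 0 < (1 + l%:R * c) / (1 + c).
      apply: divr_gt0; last lra.
      have : 0 <= l%:R * c by apply: mulr_ge0; rewrite ?ler0n ?ltW.
      lra.
    lra.
  rewrite lerD2r ler_pdivrMr; last lra.
  nra.
pose W (S A : {set 'I_m}) := fine (P (atom E S A)).
set Qk := \sum_(l < k.+1) 'C(k, l)%:R * pi l * g l.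
have hQ : Qk <= k%:R * p * (1 - p) / 2 by apply: Qbound => //; exact: ltW.
have Qk0 : 0 <= Qk.
  apply: sumr_ge0 => l _; apply: mulr_ge0 => //; apply: mulr_ge0; rewrite ?ler0n //.
  by apply: mulr_ge0; apply: exprn_ge0; lra.
set q := 1 - (1 - p) ^+ k.
have q0 : 0 < q.
  rewrite /q subr_gt0 exprn_ilt1; [by rewrite -lt0n | lra | lra].
have sumq : \sum_(l < k.+1) 'C(k, l)%:R * pi l * (nat_of_ord l != 0%N)%:R = q.
  have := binom1 k p; rewrite big_ord_recl /= subn0 expr0 mul1r bin0 mul1r => hb.
  rewrite big_ord_recl /= mulr0 add0r /q.
  have -> : \sum_(i < k) 'C(k, bump 0 i)%:R * pi (bump 0 i) * (bump 0 i != 0%N)%:R =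
    \sum_(i < k) 'C(k, bump 0 i)%:R * (p ^+ bump 0 i * (1 - p) ^+ (k - bump 0 i)).
    by apply: eq_bigr => l _; rewrite mulr1.
  lra.
have perS : forall S : {set 'I_m}, #|S| = k ->
  [/\ Vfun P k E a b S = (ln a + L * fine (Ufun P E S) +
        \sum_(A : {set 'I_m} | A \subset S) g #|A| * W S A)%:E,
      (1 - lambda) * Qk <= \sum_(A : {set 'I_m} | A \subset S) g #|A| * W S A,
      \sum_(A : {set 'I_m} | A \subset S) g #|A| * W S A <= (1 + lambda) * Qk
    & (1 - lambda) * q <= fine (Ufun P E S)].
  move=> S Sk.
  have Wb : forall A : {set 'I_m}, A \subset S -> #|A| != 0%N ->
      (1 - lambda) * pi #|A| <= W S A /\ W S A <= (1 + lambda) * pi #|A|.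
    move=> A AS A0.
    have [h1 h2] := hyp S A Sk AS (ltac:(by rewrite lt0n A0 -Sk subset_leq_card)).
    have fin := fin_num_measure P _ (matom mE S A).
    rewrite -(fineK fin) !lee_fin in h1 h2.
    by rewrite /pi !mulrA; split.
  have W0 : forall A : {set 'I_m}, 0 <= W S A by move=> A; apply: fine_ge0; exact: measure_ge0.
  have sW := sum_atoms P mE S.
  have UF := U_formula P mE S.
  have QS : \sum_(A : {set 'I_m} | A \subset S) pi #|A| * g #|A| = Qk.
    rewrite (sum_subsets_card S (fun l => pi l * g l)) Sk /Qk.
    by apply: eq_bigr => l _; rewrite mulrA.
  have qS : \sum_(A : {set 'I_m} | A \subset S) pi #|A| * (#|A| != 0%N)%:R = q.
    rewrite (sum_subsets_card S (fun l => pi l * (l != 0%N)%:R)) Sk -sumq.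
    by apply: eq_bigr => l _; rewrite mulrA.
  split.
  - rewrite (V_formula P mE a b Sk) UF; congr (_%:E).
    transitivity (\sum_(A : {set 'I_m} | A \subset S) (ln a * W S A +
        L * (W S A * (#|A| != 0%N)%:R) + g #|A| * W S A)).
      by apply: eq_bigr => A _; rewrite Fform /W; ring.
    by rewrite !big_split /= -!mulr_sumr sW mulr1.
  - rewrite -QS mulr_sumr; apply: ler_sum => A AS.
    case: (boolP (#|A| == 0%N)) => [/eqP A0|A0].
      by rewrite A0 /g /= !mulr0 mul0r.
    have [h1 _] := Wb A AS A0.
    by rewrite mulrA mulrC; exact: (ler_wpM2l (g0 _) h1).
  - rewrite -QS mulr_sumr; apply: ler_sum => A AS.
    case: (boolP (#|A| == 0%N)) => [/eqP A0|A0].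
      by rewrite A0 /g /= !mulr0 mul0r.
    have [_ h2] := Wb A AS A0.
    by rewrite mulrA [g _ * _]mulrC; exact: (ler_wpM2r (g0 _) h2).
  - rewrite UF -qS mulr_sumr; apply: ler_sum => A AS.
    case: (boolP (#|A| == 0%N)) => [/eqP A0|A0].
      by rewrite A0 /= !mulr0.
    have [h1 _] := Wb A AS A0.
    by rewrite mulrA; apply: ler_wpM2r; rewrite ?ler0n.
have [VW GWlo _ UWlo] := perS SW SWk.
have [VL _ GLhi _] := perS SL SLk.
have Vle := SLopt SW SWk; rewrite VW VL lee_fin in Vle.
move: Vle GWlo GLhi UWlo.
set UW := fine (Ufun P E SW); set UL := fine (Ufun P E SL).
set GW := \sum_(A : {set 'I_m} | A \subset SW) g #|A| * W SW A.
set GL := \sum_(A : {set 'I_m} | A \subset SL) g #|A| * W SL A.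
move=> Vle GWlo GLhi UWlo.
have key : L * (UW - UL) <= 2 * lambda * Qk.
  rewrite mulrBr; lra.
have lq0 : 0 <= (1 - lambda) * q by apply: mulr_ge0; lra.
have UW0 : 0 < UW by apply: lt_le_trans UWlo; apply: mulr_gt0 => //; lra.
have D0 : 0 < L * (1 - lambda) * q by apply: mulr_gt0 => //; apply: mulr_gt0 => //; lra.
rewrite ler_pdivlMr // mulrAC ler_pdivrMr //.
have z1 := zeta3_ge1 R.
have kpp : 0 <= k%:R * p * (1 - p) by apply: mulr_ge0; [apply: mulr_ge0; rewrite ?ler0n ?ltW | lra].
have lQ : 0 <= 2 * lambda * Qk by apply: mulr_ge0 => //; apply: mulr_ge0.
have s1 : (UW - UL) * (L * (1 - lambda) * q) <= 2 * lambda * Qk * ((1 - lambda) * q).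
  have -> : (UW - UL) * (L * (1 - lambda) * q) = L * (UW - UL) * ((1 - lambda) * q) by ring.
  exact: ler_wpM2r.
have s2 : 2 * lambda * Qk * ((1 - lambda) * q) <= 2 * lambda * Qk * UW by apply: ler_wpM2l.
have s3 : 2 * lambda * Qk <= 2 * zeta3 R * lambda * k%:R * p * (1 - p).
  have : Qk <= zeta3 R * (k%:R * p * (1 - p)).
    apply: le_trans hQ _; nra.
  move=> h.
  have -> : 2 * zeta3 R * lambda * k%:R * p * (1 - p) =
     2 * lambda * (zeta3 R * (k%:R * p * (1 - p))) by ring.
  by apply: ler_wpM2l => //; apply: mulr_ge0.
apply: le_trans s1 _; apply: le_trans s2 _; apply: ler_wpM2r => //; exact: ltW.
Qed.
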